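(* Assume $(\hat f^{(i)})_{i\in[M+1]}$, $\hat f^{(i)}\in\mathbb{R}^{m_i}$, is an optimal solution of the Lagrange dual problem $\max L$. Put $\hat u^{(i)}=\exp(\hat f^{(i)}/\epsilon)$ (componentwise) for $i\in[M+1]$. Then the matrices \[ \hat P^{(i)}=\mathrm{diag}(\hat u^{(i)})K^{(i)}\mathrm{diag}(\mathbf 1_{m_{i+1}}/\hat u^{(i+1)})\ (i\in[M-1]),\qquad \hat P^{(M)}=\mathrm{diag}(\hat u^{(M)})K^{(M)}\mathrm{diag}(\hat u^{(M+1)}) \] form an optimal solution (in particular a feasible one) of the regularized sequentially composed optimal transport problem.
   Context: Fix $M\ge2$, positive integers $m_1,\dots,m_{M+1}$, cost matrices $C^{(i)}\in\mathbb{R}_{\ge0}^{m_i\times m_{i+1}}$, probability vectors $a\in\mathbb{R}^{m_1}$, $b\in\mathbb{R}^{m_{M+1}}$, $\epsilon>0$, Gibbs kernels $K^{(i)}_{jk}=\exp(-C^{(i)}_{jk}/\epsilon)$. The regularized sequentially composed OT problem: minimize $\sum_{i=1}^M(\langle C^{(i)},P^{(i)}\rangle-\epsilon H(P^{(i)}))$ over $P^{(i)}\in\mathbb{R}_{\ge0}^{m_i\times m_{i+1}}$ subject to $P^{(1)}\mathbf 1=a$, $(P^{(M)})^\top\mathbf 1=b$, $(P^{(i)})^\top\mathbf 1=P^{(i+1)}\mathbf 1$ for $i\in[M-1]$, with $H(P)=-\sum P_{jk}(\log P_{jk}-1)$. Its Lagrange dual is to maximize over $f^{(i)}\in\mathbb{R}^{m_i}$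 \[ L((f^{(i)})_i)=\langle f^{(1)},a\rangle+\langle f^{(M+1)},b\rangle-\epsilon\Big(\sum_{j,k}\exp\big((f^{(M)}_j+f^{(M+1)}_k-C^{(M)}_{jk})/\epsilon\big)+\sum_{i=1}^{M-1}\sum_{j,k}\exp\big((f^{(i)}_j-f^{(i+1)}_k-C^{(i)}_{jk})/\epsilon\big)\Big). \] *)

(* Defs.v *)
From HB Require Import structures.
From mathcomp Require Import all_boot all_order all_algebra.
From mathcomp Require Import all_classical all_reals.
From mathcomp Require Import sequences exp.
Set Implicit Arguments. Unset Strict Implicit. Unset Printing Implicit Defensive.
Import Order.TTheory GRing.Theory Num.Theory.
Local Open Scope ring_scope.

(* Conventions: the paper's index i in [M+1] = {1,...,M+1} is shifted to
   i - 1 in {0,...,M}.  Entries at other indices are irrelevant.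
   M >= 2 is encoded as M = N.+2 so that the dimensions of the last cost
   matrix (m N.+1, m N.+2) match those of f^{(M+1)} = f N.+2 definitionally. *)

Section Defs.
Variable R : realType.

Definition ent_term (x : R) : R := if x == 0 then 0 else x * (ln x - 1).

Definition entropy (p q : nat) (P : 'M[R]_(p, q)) : R :=
  - \sum_(j < p) \sum_(k < q) ent_term (P j k).

Definition frob (p q : nat) (A B : 'M[R]_(p, q)) : R :=
  \sum_(j < p) \sum_(k < q) A j k * B j k.

Definition ones (p : nat) : 'cV[R]_p := const_mx 1.

Definition prob_vec (p : nat) (v : 'cV[R]_p) : Prop :=
  (forall j, 0 <= v j 0) /\ \sum_(j < p) v j 0 = 1.

Definition gibbs (eps : R) (p q : nat) (C : 'M[R]_(p, q)) : 'M[R]_(p, q) :=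
  map_mx (fun c => expR (- c / eps)) C.

Definition primal_obj (M : nat) (m : nat -> nat) (eps : R)
  (C P : forall i : nat, 'M[R]_(m i, m i.+1)) : R :=
  \sum_(i < M) (frob (C i) (P i) - eps * entropy (P i)).

Definition feasible (N : nat) (m : nat -> nat)
  (a : 'cV[R]_(m 0)) (b : 'cV[R]_(m N.+2))
  (P : forall i : nat, 'M[R]_(m i, m i.+1)) : Prop :=
  [/\ (forall i : nat, (i < N.+2)%N -> forall j k, 0 <= P i j k),
      P 0%N *m ones _ = a,
      (P N.+1)^T *m ones _ = b &
      (forall i : nat, (i < N.+1)%N -> (P i)^T *m ones _ = P i.+1 *m ones _)].

Definition primal_optimal (N : nat) (m : nat -> nat) (eps : R)
  (C : forall i : nat, 'M[R]_(m i, m i.+1))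
  (a : 'cV[R]_(m 0)) (b : 'cV[R]_(m N.+2))
  (P : forall i : nat, 'M[R]_(m i, m i.+1)) : Prop :=
  feasible a b P /\
  forall Q : forall i : nat, 'M[R]_(m i, m i.+1),
    feasible a b Q -> primal_obj N.+2 eps C P <= primal_obj N.+2 eps C Q.

Definition dual_L (N : nat) (m : nat -> nat) (eps : R)
  (C : forall i : nat, 'M[R]_(m i, m i.+1))
  (a : 'cV[R]_(m 0)) (b : 'cV[R]_(m N.+2))
  (f : forall i : nat, 'cV[R]_(m i)) : R :=
  \sum_(j < m 0%N) f 0%N j 0 * a j 0 + \sum_(k < m N.+2) f N.+2 k 0 * b k 0
  - eps * (\sum_(j < m N.+1) \sum_(k < m N.+2)
             expR ((f N.+1 j 0 + f N.+2 k 0 - C N.+1 j k) / eps)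
           + \sum_(i < N.+1) \sum_(j < m i) \sum_(k < m i.+1)
             expR ((f i j 0 - f i.+1 k 0 - C i j k) / eps)).

Definition scaling (eps : R) (p : nat) (f : 'cV[R]_p) : 'cV[R]_p :=
  map_mx (fun x => expR (x / eps)) f.

Definition plan_of_dual (N : nat) (m : nat -> nat) (eps : R)
  (C : forall i : nat, 'M[R]_(m i, m i.+1))
  (f : forall i : nat, 'cV[R]_(m i)) (i : nat) : 'M[R]_(m i, m i.+1) :=
  let u := fun l => scaling eps (f l) in
  if i == N.+1 then
    diag_mx (u i)^T *m gibbs eps (C i) *m diag_mx (u i.+1)^T
  else
    diag_mx (u i)^T *m gibbs eps (C i) *m diag_mx (map_mx (fun x => x^-1) (u i.+1))^T.

End Defs.

(* Main.v *)
Require Import Defs.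
From HB Require Import structures.
From mathcomp Require Import all_boot all_order all_algebra.
From mathcomp Require Import all_classical all_reals.
From mathcomp Require Import sequences exp.
From mathcomp Require Import ring lra.
Set Implicit Arguments. Unset Strict Implicit. Unset Printing Implicit Defensive.
Import Order.TTheory GRing.Theory Num.Theory.
Local Open Scope ring_scope.

Lemma expR_up (R : realType) (y : R) : `|y| <= 1/2 -> expR y - 1 <= y + 2 * y ^+ 2.
Proof.
move=> hy.
have h1 := expR_ge1Dx (- y).
rewrite expRN in h1.
have ep := expR_gt0 y.
have hy1 : -(1/2) <= y <= 1/2 by rewrite -ler_norml.
case/andP: hy1 => hyl hyr.
have h2 : (1 - y) * expR y <= 1.
  have : (1 - y) <= (expR y)^-1 by lra.
  move/(ler_wpM2r (ltW ep)); by rewrite mulVf ?gt_eqF.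
nra.
Qed.

Lemma key_stat (R : realType) (eps al S1 S2 : R) : 0 < eps -> 0 <= S1 -> 0 <= S2 ->
  (forall t, al * t - eps * ((expR (t / eps) - 1) * S1 + (expR (- (t / eps)) - 1) * S2) <= 0) ->
  al = S1 - S2.
Proof.
move=> he h1 h2 H.
have Hy : forall y, `|y| <= 1/2 -> al * y <= (S1 - S2) * y + 2 * (S1 + S2) * y ^+ 2.
  move=> y hy; have := H (eps * y).
  rewrite mulrAC divff ?gt_eqF // mul1r.
  have e1 := expR_up hy.
  have e2 : expR (- y) - 1 <= - y + 2 * (- y) ^+ 2 by apply: expR_up; rewrite normrN.
  rewrite sqrrN in e2.
  move=> h.
  have h' : eps * (al * y) <= eps * ((expR y - 1) * S1 + (expR (- y) - 1) * S2).
    by rewrite -subr_le0 mulrCA.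
  rewrite ler_pM2l // in h'.
  have f1 : (expR y - 1) * S1 <= (y + 2 * y ^+ 2) * S1 by apply: ler_wpM2r.
  have f2 : (expR (-y) - 1) * S2 <= (- y + 2 * y ^+ 2) * S2 by apply: ler_wpM2r.
  have -> : (S1 - S2) * y + 2 * (S1 + S2) * y ^+ 2 = (y + 2 * y ^+ 2) * S1 + (- y + 2 * y ^+ 2) * S2 by ring.
  lra.
set d := al - (S1 - S2).
have nd := normr_ge0 d.
set K := 2 * (S1 + S2) + 1 + `|d|.
have Kp : 0 < K.
  rewrite /K; lra.
have Kd : `|d| <= K by rewrite /K; lra.
set y := d / (2 * K).
have hy : `|y| <= 1/2.
  rewrite /y normrM normfV (@gtr0_norm _ (2 * K)); last lra.
  rewrite ler_pdivrMr; last lra.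
  lra.
have := Hy y hy.
have yd : y * (2 * K) = d by rewrite /y mulfVK // gt_eqF //; lra.
move=> hh.
set c := 2 * (S1 + S2).
have hh2 : d * y <= c * y ^+ 2 by rewrite /c /d; lra.
have h3 : d * d * (2 * K) <= c * d * d.
  have -> : d * d * (2 * K) = d * y * (2 * K) * (2 * K) by rewrite -yd; ring.
  have -> : c * d * d = c * y ^+ 2 * (2 * K) * (2 * K) by rewrite -yd; ring.
  by rewrite !ler_pM2r //; lra.
have cK : c < 2 * K by rewrite /c /K; lra.
have dd : d * d = 0.
  have : 0 <= d * d by nra.
  nra.
by apply/eqP; rewrite -subr_eq0; apply/eqP; move: dd => /eqP; rewrite mulf_eq0 orbb => /eqP.
Qed.

Lemma fenchel (R : realType) (eps q c g : R) : 0 < eps -> 0 <= q ->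
  g * q - eps * expR ((g - c) / eps) <= c * q + eps * ent_term q.
Proof.
move=> he hq; rewrite /ent_term.
set x := (g - c) / eps.
have gx : g = c + eps * x by rewrite /x mulrC divfK ?gt_eqF //; ring.
have ex := expR_gt0 x.
case: eqP => [->|/eqP q0].
  rewrite !mulr0 addr0; nra.
have qp : 0 < q by rewrite lt_def q0.
have h : q * (1 + (x - ln q)) <= expR x.
  have -> : expR x = q * expR (x - ln q).
    by rewrite expRB lnK ?posrE // mulrC divfK ?gt_eqF.
  by rewrite ler_pM2l // expR_ge1Dx.
rewrite gx.
have : eps * (q * (1 + (x - ln q))) <= eps * expR x by rewrite ler_pM2l.
nra.
Qed.

Lemma fenchel_eq (R : realType) (eps c g : R) : 0 < eps ->
  let q := expR ((g - c) / eps) in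
  g * q - eps * expR ((g - c) / eps) = c * q + eps * ent_term q.
Proof.
move=> he q; rewrite /ent_term /q expR_eq0 expRK.
set x := (g - c) / eps.
have gx : g = c + eps * x by rewrite /x mulrC divfK ?gt_eqF //; ring.
rewrite gx; ring.
Qed.

Definition Gf (R : realType) (N : nat) (m : nat -> nat) (f : forall i : nat, 'cV[R]_(m i))
  (i : nat) (j : 'I_(m i)) (k : 'I_(m i.+1)) : R :=
  if i == N.+1 then f i j 0 + f i.+1 k 0 else f i j 0 - f i.+1 k 0.
Arguments Gf {R} N {m} f i j k.

Lemma plan_entry (R : realType) (N : nat) (m : nat -> nat) (eps : R)
  (C : forall i : nat, 'M[R]_(m i, m i.+1)) (f : forall i : nat, 'cV[R]_(m i)) i j k :
  plan_of_dual N eps C f i j k = expR ((Gf N f i j k - C i j k) / eps).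
Proof.
rewrite /plan_of_dual /Gf; case: eqP => _.
  rewrite mul_mx_diag mul_diag_mx !mxE -!expRD.
  by congr expR; ring.
rewrite mul_mx_diag mul_diag_mx !mxE -expRN -!expRD.
by congr expR; ring.
Qed.

Lemma rowsum (R : realType) p q (Q : 'M[R]_(p, q)) j : (Q *m @ones R q) j 0 = \sum_k Q j k.
Proof. by rewrite mxE; apply: eq_bigr => k _; rewrite mxE mulr1. Qed.

Lemma colsum (R : realType) p q (Q : 'M[R]_(p, q)) k : (Q^T *m @ones R p) k 0 = \sum_j Q j k.
Proof. by rewrite mxE; apply: eq_bigr => j _; rewrite !mxE mulr1. Qed.

Lemma tele_ord (R : realType) (A : nat -> R) n : \sum_(i < n) (A i - A i.+1) = A 0%N - A n.
Proof.
elim: n => [|n IH]; first by rewrite big_ord0 subrr.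
by rewrite big_ord_recr /= IH; ring.
Qed.

Lemma GfN (R : realType) (N : nat) (m : nat -> nat) (f : forall i : nat, 'cV[R]_(m i)) j k :
  Gf N f N.+1 j k = f N.+1 j 0 + f N.+2 k 0.
Proof. by rewrite /Gf eqxx. Qed.

Lemma lin_id (R : realType) (N : nat) (m : nat -> nat) (f : forall i : nat, 'cV[R]_(m i))
  (a : 'cV[R]_(m 0%N)) (b : 'cV[R]_(m N.+2)) (Q : forall i : nat, 'M[R]_(m i, m i.+1)) :
  feasible a b Q ->
  \sum_(i < N.+2) \sum_j \sum_k Q i j k * Gf N f i j k =
  \sum_(j < m 0%N) f 0%N j 0 * a j 0 + \sum_(k < m N.+2) f N.+2 k 0 * b k 0.
Proof.
case=> _ h0 hb hmid.
pose A (i : nat) := \sum_(j < m i) f i j 0 * \sum_k Q i j k.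
have hA : forall i : nat, (i < N.+1)%N ->
    \sum_j \sum_k Q i j k * Gf N f i j k = A i - A i.+1.
  move=> i hi.
  have GE : forall j k, Gf N f i j k = f i j 0 - f i.+1 k 0.
    by move=> j k; rewrite /Gf ifF //; apply/negbTE; rewrite neq_ltn hi.
  under eq_bigr => j _ do under eq_bigr => k _ do rewrite GE.
  have -> : A i.+1 = \sum_(k < m i.+1) f i.+1 k 0 * \sum_j Q i j k.
    rewrite /A; apply: eq_bigr => k _; congr (_ * _).
    by rewrite -rowsum -(hmid i hi) colsum.
  rewrite /=.
  transitivity (\sum_j \sum_k Q i j k * f i j 0 - \sum_j \sum_k Q i j k * f i.+1 k 0).
    rewrite -sumrB; apply: eq_bigr => j _; rewrite -sumrB; apply: eq_bigr => k _; ring.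
  congr (_ - _).
    apply: eq_bigr => j _; rewrite mulr_sumr; apply: eq_bigr => k _; ring.
  rewrite exchange_big; apply: eq_bigr => k _; rewrite mulr_sumr; apply: eq_bigr => j _; ring.
rewrite big_ord_recr /=.
rewrite (eq_bigr (fun i : 'I_N.+1 => A i - A i.+1)); last first.
  by move=> i _; apply: hA.
rewrite tele_ord.
under eq_bigr => j _ do under eq_bigr => k _ do rewrite GfN.
have -> : A 0%N = \sum_(j < m 0%N) f 0%N j 0 * a j 0.
  by rewrite /A; apply: eq_bigr => j _; rewrite -rowsum h0.
have -> : \sum_(k < m N.+2) f N.+2 k 0 * b k 0 = \sum_(k < m N.+2) f N.+2 k 0 * \sum_j Q N.+1 j k.
  by apply: eq_bigr => k _; rewrite -colsum hb.
have -> : \sum_(j < m N.+1) \sum_(k < m N.+2) Q N.+1 j k * (f N.+1 j 0 + f N.+2 k 0) =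
   \sum_(j < m N.+1) \sum_(k < m N.+2) Q N.+1 j k * f N.+1 j 0 + \sum_(j < m N.+1) \sum_(k < m N.+2) Q N.+1 j k * f N.+2 k 0.
  rewrite -big_split; apply: eq_bigr => j _; rewrite -big_split; apply: eq_bigr => k _; exact: mulrDr.
have -> : \sum_(j < m N.+1) \sum_(k < m N.+2) Q N.+1 j k * f N.+1 j 0 = A N.+1.
  by apply: eq_bigr => j _; rewrite mulr_sumr; apply: eq_bigr => k _; ring.
rewrite exchange_big /=.
have -> : \sum_(k < m N.+2) \sum_(j < m N.+1) Q N.+1 j k * f N.+2 k 0 = \sum_(k < m N.+2) f N.+2 k 0 * \sum_j Q N.+1 j k.
  by apply: eq_bigr => k _; rewrite mulr_sumr; apply: eq_bigr => j _; ring.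
ring.
Qed.

Lemma dual_sum (R : realType) (N : nat) (m : nat -> nat) (eps : R)
  (C : forall i : nat, 'M[R]_(m i, m i.+1)) (f : forall i : nat, 'cV[R]_(m i))
  (a : 'cV[R]_(m 0%N)) (b : 'cV[R]_(m N.+2)) (Q : forall i : nat, 'M[R]_(m i, m i.+1)) :
  feasible a b Q ->
  dual_L eps C a b f = \sum_(i < N.+2) \sum_j \sum_k
     (Gf N f i j k * Q i j k - eps * expR ((Gf N f i j k - C i j k) / eps)).
Proof.
move=> hQ.
have -> : \sum_(i < N.+2) \sum_j \sum_k
     (Gf N f i j k * Q i j k - eps * expR ((Gf N f i j k - C i j k) / eps)) =
   \sum_(i < N.+2) \sum_j \sum_k Q i j k * Gf N f i j k -
   eps * \sum_(i < N.+2) \sum_j \sum_k expR ((Gf N f i j k - C i j k) / eps).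
  rewrite mulr_sumr -sumrB; apply: eq_bigr => i _.
  rewrite mulr_sumr -sumrB; apply: eq_bigr => j _.
  rewrite mulr_sumr -sumrB; apply: eq_bigr => k _; ring.
rewrite (lin_id _ hQ) /dual_L (big_ord_recr N.+1) /=.
have -> : \sum_(j < m N.+1) \sum_(k < m N.+2) expR ((Gf N f N.+1 j k - C N.+1 j k) / eps) =
   \sum_(j < m N.+1) \sum_(k < m N.+2) expR ((f N.+1 j 0 + f N.+2 k 0 - C N.+1 j k) / eps).
  by apply: eq_bigr => j _; apply: eq_bigr => k _; rewrite GfN.
have -> : \sum_(i < N.+1) \sum_(j < m (widen_ord (leqnSn N.+1) i)) \sum_(k < m (widen_ord (leqnSn N.+1) i).+1)
      expR ((Gf N f (widen_ord (leqnSn N.+1) i) j k - C (widen_ord (leqnSn N.+1) i) j k) / eps) =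
    \sum_(i < N.+1) \sum_(j < m i) \sum_(k < m i.+1) expR ((f i j 0 - f i.+1 k 0 - C i j k) / eps).
  apply: eq_bigr => i _ /=.
  have GE : forall j k, Gf N f i j k = f i j 0 - f i.+1 k 0.
    by move=> j k; rewrite /Gf ifF //; apply/negbTE; rewrite neq_ltn ltn_ord.
  by apply: eq_bigr => j _; apply: eq_bigr => k _; rewrite GE.
ring.
Qed.

Lemma primal_sum (R : realType) (N : nat) (m : nat -> nat) (eps : R)
  (C : forall i : nat, 'M[R]_(m i, m i.+1)) (Q : forall i : nat, 'M[R]_(m i, m i.+1)) :
  primal_obj N.+2 eps C Q = \sum_(i < N.+2) \sum_j \sum_k
     (C i j k * Q i j k + eps * ent_term (Q i j k)).
Proof.
apply: eq_bigr => i _; rewrite /frob /entropy mulrN opprK mulr_sumr -big_split.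
apply: eq_bigr => j _; rewrite mulr_sumr -big_split; apply: eq_bigr => k _ //.
Qed.

Lemma weak_dual (R : realType) (N : nat) (m : nat -> nat) (eps : R) (he : 0 < eps)
  (C : forall i : nat, 'M[R]_(m i, m i.+1)) (f : forall i : nat, 'cV[R]_(m i))
  (a : 'cV[R]_(m 0%N)) (b : 'cV[R]_(m N.+2)) (Q : forall i : nat, 'M[R]_(m i, m i.+1)) :
  feasible a b Q -> dual_L eps C a b f <= primal_obj N.+2 eps C Q.
Proof.
move=> hQ; rewrite (dual_sum _ _ _ hQ) primal_sum.
case: hQ => hnn _ _ _.
apply: ler_sum => i _; apply: ler_sum => j _; apply: ler_sum => k _.
exact: fenchel he (hnn i (ltn_ord i) j k).
Qed.

Lemma plan_value (R : realType) (N : nat) (m : nat -> nat) (eps : R) (he : 0 < eps)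
  (C : forall i : nat, 'M[R]_(m i, m i.+1)) (f : forall i : nat, 'cV[R]_(m i))
  (a : 'cV[R]_(m 0%N)) (b : 'cV[R]_(m N.+2)) :
  feasible a b (plan_of_dual N eps C f) ->
  dual_L eps C a b f = primal_obj N.+2 eps C (plan_of_dual N eps C f).
Proof.
move=> hQ; rewrite (dual_sum _ _ _ hQ) primal_sum.
apply: eq_bigr => i _; apply: eq_bigr => j _; apply: eq_bigr => k _.
rewrite plan_entry; exact: fenchel_eq.
Qed.

Definition dlt (R : realType) (m : nat -> nat) (i0 n0 : nat) (t : R) (l : nat) (k : 'I_(m l)) : R :=
  if (l == i0) && (k == n0 :> nat) then t else 0.
Arguments dlt {R m} i0 n0 t l k.

Definition pert (R : realType) (m : nat -> nat) (f : forall i : nat, 'cV[R]_(m i))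
  (i0 n0 : nat) (t : R) : forall l : nat, 'cV[R]_(m l) :=
  fun l => \col_k (f l k 0 + dlt i0 n0 t l k).
Arguments pert {R m} f i0 n0 t l.

Lemma pertE (R : realType) (m : nat -> nat) (f : forall i : nat, 'cV[R]_(m i)) i0 n0 t l k :
  pert f i0 n0 t l k 0 = f l k 0 + dlt i0 n0 t l k.
Proof. by rewrite /pert mxE. Qed.

Lemma dual_pert (R : realType) (N : nat) (m : nat -> nat) (eps : R)
  (C : forall i : nat, 'M[R]_(m i, m i.+1)) (f : forall i : nat, 'cV[R]_(m i))
  (a : 'cV[R]_(m 0%N)) (b : 'cV[R]_(m N.+2)) i0 n0 t :
  let d := dlt i0 n0 t in
  dual_L eps C a b (pert f i0 n0 t) = dual_L eps C a b f
   + \sum_(j < m 0%N) d 0%N j * a j 0 + \sum_(k < m N.+2) d N.+2 k * b k 0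
   - eps * (\sum_(j < m N.+1) \sum_(k < m N.+2)
             expR ((f N.+1 j 0 + f N.+2 k 0 - C N.+1 j k) / eps) * (expR ((d N.+1 j + d N.+2 k) / eps) - 1)
           + \sum_(i < N.+1) \sum_(j < m i) \sum_(k < m i.+1)
             expR ((f i j 0 - f i.+1 k 0 - C i j k) / eps) * (expR ((d i j - d i.+1 k) / eps) - 1)).
Proof.
move=> d; rewrite /dual_L.
have -> : \sum_(j < m 0%N) pert f i0 n0 t 0%N j 0 * a j 0 =
   \sum_(j < m 0%N) f 0%N j 0 * a j 0 + \sum_(j < m 0%N) d 0%N j * a j 0.
  by rewrite -big_split; apply: eq_bigr => j _; rewrite pertE /= mulrDl.
have -> : \sum_(k < m N.+2) pert f i0 n0 t N.+2 k 0 * b k 0 =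
   \sum_(k < m N.+2) f N.+2 k 0 * b k 0 + \sum_(k < m N.+2) d N.+2 k * b k 0.
  by rewrite -big_split; apply: eq_bigr => j _; rewrite pertE /= mulrDl.
have -> : \sum_(j < m N.+1) \sum_(k < m N.+2)
      expR ((pert f i0 n0 t N.+1 j 0 + pert f i0 n0 t N.+2 k 0 - C N.+1 j k) / eps) =
   \sum_(j < m N.+1) \sum_(k < m N.+2) expR ((f N.+1 j 0 + f N.+2 k 0 - C N.+1 j k) / eps) +
   \sum_(j < m N.+1) \sum_(k < m N.+2)
             expR ((f N.+1 j 0 + f N.+2 k 0 - C N.+1 j k) / eps) * (expR ((d N.+1 j + d N.+2 k) / eps) - 1).
  rewrite -big_split; apply: eq_bigr => j _; rewrite -big_split; apply: eq_bigr => k _ /=.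
  rewrite !pertE mulrBr mulr1 -expRD [RHS]addrC subrK; congr expR; rewrite /d; ring.
have -> : \sum_(i < N.+1) \sum_(j < m i) \sum_(k < m i.+1)
      expR ((pert f i0 n0 t i j 0 - pert f i0 n0 t i.+1 k 0 - C i j k) / eps) =
   \sum_(i < N.+1) \sum_(j < m i) \sum_(k < m i.+1) expR ((f i j 0 - f i.+1 k 0 - C i j k) / eps) +
   \sum_(i < N.+1) \sum_(j < m i) \sum_(k < m i.+1)
             expR ((f i j 0 - f i.+1 k 0 - C i j k) / eps) * (expR ((d i j - d i.+1 k) / eps) - 1).
  rewrite -big_split; apply: eq_bigr => i _.
  rewrite -big_split; apply: eq_bigr => j _; rewrite -big_split; apply: eq_bigr => k _ /=.
  rewrite !pertE mulrBr mulr1 -expRD [RHS]addrC subrK; congr expR; rewrite /d; ring.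
ring.
Qed.

Lemma sum_pick (R : realType) n (j0 : 'I_n) (G : 'I_n -> R -> R) (t : R) :
  (forall j, G j 0 = 0) ->
  \sum_(j < n) G j (if (j == j0 :> nat) then t else 0) = G j0 t.
Proof.
move=> G0; rewrite (bigD1 j0) //= eqxx big1 ?addr0 // => j /negbTE jne.
by have -> : (nat_of_ord j == nat_of_ord j0) = false by exact: jne.
Qed.

Lemma sum_ifnat (R : realType) n c (X : R) :
  \sum_(i < n) (if (i == c :> nat) then X else 0) = if (c < n)%N then X else 0.
Proof.
case: ltnP => h.
  exact: (@sum_pick R n (Ordinal h) (fun _ x => x) X).
by apply: big1 => i _; rewrite ifF //; apply/negbTE; rewrite neq_ltn (leq_trans (ltn_ord i) h).
Qed.

Lemma dlt0 (R : realType) (m : nat -> nat) i0 n0 (t : R) l (k : 'I_(m l)) :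
  l != i0 -> dlt i0 n0 t l k = 0.
Proof. by move=> /negbTE h; rewrite /dlt h. Qed.

Lemma dlt1 (R : realType) (m : nat -> nat) i0 n0 (t : R) (k : 'I_(m i0)) :
  dlt i0 n0 t i0 k = if (k == n0 :> nat) then t else 0.
Proof. by rewrite /dlt eqxx. Qed.

Lemma Tnat_eq (R : realType) (m : nat -> nat) (eps : R)
  (C : forall i : nat, 'M[R]_(m i, m i.+1)) (f : forall i : nat, 'cV[R]_(m i))
  i (j0 : 'I_(m i.+1)) t l :
  let d := dlt i.+1 j0 t in
  \sum_(j < m l) \sum_(k < m l.+1) expR ((f l j 0 - f l.+1 k 0 - C l j k) / eps) *
        (expR ((d l j - d l.+1 k) / eps) - 1)
  = (if l == i then \sum_(j < m i) expR ((f i j 0 - f i.+1 j0 0 - C i j j0) / eps) *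
         (expR (- (t / eps)) - 1) else 0)
  + (if l == i.+1 then \sum_(k < m i.+2) expR ((f i.+1 j0 0 - f i.+2 k 0 - C i.+1 j0 k) / eps) *
         (expR (t / eps) - 1) else 0).
Proof.
move=> d.
case: (eqVneq l i) => [->|ne].
  rewrite (ltn_eqF (ltnSn i)) addr0; apply: eq_bigr => j _.
  have ne' : i != i.+1 by rewrite neq_ltn ltnSn.
  under eq_bigr => k _ do rewrite /d dlt1 (dlt0 _ _ _ ne').
  rewrite (@sum_pick R _ j0 (fun k x => expR ((f i j 0 - f i.+1 k 0 - C i j k) / eps) *
        (expR ((0 - x) / eps) - 1))); last by move=> k; rewrite subrr mul0r expR0 subrr mulr0.
  by rewrite sub0r mulNr.
case: (eqVneq l i.+1) => [->|ne2].
  rewrite /= add0r.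
  have ne' : i.+2 != i.+1 by rewrite neq_ltn ltnSn orbT.
  under eq_bigr => j _ do under eq_bigr => k _ do rewrite /d dlt1 (dlt0 _ _ _ ne').
  rewrite (@sum_pick R _ j0 (fun j x => \sum_(k < m i.+2) expR ((f i.+1 j 0 - f i.+2 k 0 - C i.+1 j k) / eps) *
        (expR ((x - 0) / eps) - 1))); last first.
    by move=> j; apply: big1 => k _; rewrite subrr mul0r expR0 subrr mulr0.
  by apply: eq_bigr => k _; rewrite subr0.
have ne3 : l.+1 != i.+1 by rewrite eqSS.
rewrite /= addr0; apply: big1 => j _; apply: big1 => k _.
by rewrite /d (dlt0 _ _ _ ne2) (dlt0 _ _ _ ne3) subrr mul0r expR0 subrr mulr0.
Qed.

Lemma statA (R : realType) (N : nat) (m : nat -> nat) (eps : R) (he : 0 < eps)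
  (C : forall i : nat, 'M[R]_(m i, m i.+1)) (a : 'cV[R]_(m 0%N)) (b : 'cV[R]_(m N.+2))
  (fhat : forall i : nat, 'cV[R]_(m i))
  (hopt : forall f : forall i : nat, 'cV[R]_(m i), dual_L eps C a b f <= dual_L eps C a b fhat)
  (j0 : 'I_(m 0%N)) :
  a j0 0 = \sum_k expR ((fhat 0%N j0 0 - fhat 1%N k 0 - C 0%N j0 k) / eps).
Proof.
set S := \sum_k _.
have S0 : 0 <= S by apply: sumr_ge0 => k _; exact: expR_ge0.
suff : a j0 0 = S - 0 by rewrite subr0.
apply: (key_stat he S0 (lexx 0)) => t.
have := hopt (pert fhat 0%N j0 t); rewrite dual_pert /=.
have s1 : \sum_(j < m 0%N) dlt 0 j0 t 0 j * a j 0 = t * a j0 0.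
  under eq_bigr => j _ do rewrite dlt1.
  exact: (@sum_pick R _ j0 (fun j x => x * a j 0) t (fun j => mul0r _)).
have s2 : \sum_(k < m N.+2) dlt 0 j0 t N.+2 k * b k 0 = 0.
  by apply: big1 => k _; rewrite dlt0 // mul0r.
have s3 : \sum_(j < m N.+1) \sum_(k < m N.+2)
         expR ((fhat N.+1 j 0 + fhat N.+2 k 0 - C N.+1 j k) / eps) *
         (expR ((dlt 0 j0 t N.+1 j + dlt 0 j0 t N.+2 k) / eps) - 1) = 0.
  by apply: big1 => j _; apply: big1 => k _; rewrite !dlt0 // addr0 mul0r expR0 subrr mulr0.
have s4 : \sum_(i < N.+1) \sum_(j < m i) \sum_(k < m i.+1)
            expR ((fhat i j 0 - fhat i.+1 k 0 - C i j k) / eps) *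
            (expR ((dlt 0 j0 t i j - dlt 0 j0 t i.+1 k) / eps) - 1) = (expR (t / eps) - 1) * S.
  rewrite big_ord_recl [X in _ + X]big1 ?addr0; last first.
    move=> i _; apply: big1 => j _; apply: big1 => k _.
    by rewrite !dlt0 // subrr mul0r expR0 subrr mulr0.
  rewrite /= /S mulr_sumr.
  under eq_bigr => j _ do rewrite dlt1.
  rewrite (@sum_pick R _ j0 (fun j x => \sum_(k < m 1%N) expR ((fhat 0%N j 0 - fhat 1%N k 0 - C 0%N j k) / eps) *
            (expR ((x - dlt 0 j0 t 1 k) / eps) - 1))); last first.
    by move=> j; apply: big1 => k _; rewrite dlt0 // subrr mul0r expR0 subrr mulr0.
  by apply: eq_bigr => k _; rewrite dlt0 // subr0 mulrC.
rewrite s1 s2 s3 s4; lra.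
Qed.

Lemma statB (R : realType) (N : nat) (m : nat -> nat) (eps : R) (he : 0 < eps)
  (C : forall i : nat, 'M[R]_(m i, m i.+1)) (a : 'cV[R]_(m 0%N)) (b : 'cV[R]_(m N.+2))
  (fhat : forall i : nat, 'cV[R]_(m i))
  (hopt : forall f : forall i : nat, 'cV[R]_(m i), dual_L eps C a b f <= dual_L eps C a b fhat)
  (k0 : 'I_(m N.+2)) :
  b k0 0 = \sum_j expR ((fhat N.+1 j 0 + fhat N.+2 k0 0 - C N.+1 j k0) / eps).
Proof.
set S := \sum_j _.
have S0 : 0 <= S by apply: sumr_ge0 => k _; exact: expR_ge0.
suff : b k0 0 = S - 0 by rewrite subr0.
apply: (key_stat he S0 (lexx 0)) => t.
have := hopt (pert fhat N.+2 k0 t); rewrite dual_pert /=.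
have hN1 : N.+1 != N.+2 by rewrite neq_ltn ltnSn.
have s1 : \sum_(j < m 0%N) dlt N.+2 k0 t 0 j * a j 0 = 0.
  by apply: big1 => k _; rewrite dlt0 // mul0r.
have s2 : \sum_(k < m N.+2) dlt N.+2 k0 t N.+2 k * b k 0 = t * b k0 0.
  under eq_bigr => j _ do rewrite dlt1.
  exact: (@sum_pick R _ k0 (fun j x => x * b j 0) t (fun j => mul0r _)).
have s3 : \sum_(j < m N.+1) \sum_(k < m N.+2)
         expR ((fhat N.+1 j 0 + fhat N.+2 k 0 - C N.+1 j k) / eps) *
         (expR ((dlt N.+2 k0 t N.+1 j + dlt N.+2 k0 t N.+2 k) / eps) - 1) = (expR (t / eps) - 1) * S.
  rewrite /S mulr_sumr; apply: eq_bigr => j _.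
  under eq_bigr => k _ do rewrite dlt1 (dlt0 _ _ _ hN1).
  rewrite (@sum_pick R _ k0 (fun k x => expR ((fhat N.+1 j 0 + fhat N.+2 k 0 - C N.+1 j k) / eps) *
         (expR ((0 + x) / eps) - 1))); last first.
    by move=> k; rewrite addr0 mul0r expR0 subrr mulr0.
  by rewrite add0r mulrC.
have s4 : \sum_(i < N.+1) \sum_(j < m i) \sum_(k < m i.+1)
            expR ((fhat i j 0 - fhat i.+1 k 0 - C i j k) / eps) *
            (expR ((dlt N.+2 k0 t i j - dlt N.+2 k0 t i.+1 k) / eps) - 1) = 0.
  apply: big1 => i _; apply: big1 => j _; apply: big1 => k _.
  have h1 : (i : nat) != N.+2 by rewrite neq_ltn (leqW (ltn_ord i)).
  have h2 : (i : nat).+1 != N.+2 by rewrite neq_ltn ltnS (ltn_ord i).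
  by rewrite (dlt0 _ _ _ h1) (dlt0 _ _ _ h2) subrr mul0r expR0 subrr mulr0.
rewrite s1 s2 s3 s4; lra.
Qed.

Lemma mid_pert (R : realType) (N : nat) (m : nat -> nat) (eps : R)
  (C : forall i : nat, 'M[R]_(m i, m i.+1)) (f : forall i : nat, 'cV[R]_(m i))
  i (j0 : 'I_(m i.+1)) t : (i < N.+1)%N ->
  \sum_(i' < N.+1) \sum_(j < m i') \sum_(k < m i'.+1)
      expR ((f i' j 0 - f i'.+1 k 0 - C i' j k) / eps) *
      (expR ((dlt i.+1 j0 t i' j - dlt i.+1 j0 t i'.+1 k) / eps) - 1)
  = \sum_(j < m i) expR ((f i j 0 - f i.+1 j0 0 - C i j j0) / eps) * (expR (- (t / eps)) - 1)
  + (if (i.+1 < N.+1)%N then \sum_(k < m i.+2) expR ((f i.+1 j0 0 - f i.+2 k 0 - C i.+1 j0 k) / eps) *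
         (expR (t / eps) - 1) else 0).
Proof.
move=> hi.
rewrite (eq_bigr (fun i' : 'I_N.+1 =>
   (if (i' == i :> nat) then \sum_(j < m i) expR ((f i j 0 - f i.+1 j0 0 - C i j j0) / eps) *
         (expR (- (t / eps)) - 1) else 0)
  + (if (i' == i.+1 :> nat) then \sum_(k < m i.+2) expR ((f i.+1 j0 0 - f i.+2 k 0 - C i.+1 j0 k) / eps) *
         (expR (t / eps) - 1) else 0))); last first.
  by move=> i' _; exact: (Tnat_eq eps C f j0 t i').
by rewrite big_split /= !sum_ifnat hi.
Qed.

Lemma statC1 (R : realType) (N : nat) (m : nat -> nat) (eps : R) (he : 0 < eps)
  (C : forall i : nat, 'M[R]_(m i, m i.+1)) (a : 'cV[R]_(m 0%N)) (b : 'cV[R]_(m N.+2))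
  (fhat : forall i : nat, 'cV[R]_(m i))
  (hopt : forall f : forall i : nat, 'cV[R]_(m i), dual_L eps C a b f <= dual_L eps C a b fhat)
  i (hi : (i < N)%N) (j0 : 'I_(m i.+1)) :
  \sum_(k < m i.+2) expR ((fhat i.+1 j0 0 - fhat i.+2 k 0 - C i.+1 j0 k) / eps) =
  \sum_(j < m i) expR ((fhat i j 0 - fhat i.+1 j0 0 - C i j j0) / eps).
Proof.
set S1 := \sum_(k < m i.+2) _.
set S2 := \sum_(j < m i) _.
have S10 : 0 <= S1 by apply: sumr_ge0 => k _; exact: expR_ge0.
have S20 : 0 <= S2 by apply: sumr_ge0 => k _; exact: expR_ge0.
apply/eqP; rewrite -subr_eq0; apply/eqP; apply/esym.
apply: (key_stat he S10 S20) => t.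
have := hopt (pert fhat i.+1 j0 t); rewrite dual_pert /=.
have hi1 : (i < N.+1)%N by apply: leqW.
have s1 : \sum_(j < m 0%N) dlt i.+1 j0 t 0 j * a j 0 = 0.
  by apply: big1 => k _; rewrite dlt0 // mul0r.
have hN2 : N.+2 != i.+1 by rewrite eqSS neq_ltn hi1 orbT.
have hN1 : N.+1 != i.+1 by rewrite eqSS neq_ltn hi orbT.
have s2 : \sum_(k < m N.+2) dlt i.+1 j0 t N.+2 k * b k 0 = 0.
  by apply: big1 => k _; rewrite (dlt0 _ _ _ hN2) mul0r.
have s3 : \sum_(j < m N.+1) \sum_(k < m N.+2)
         expR ((fhat N.+1 j 0 + fhat N.+2 k 0 - C N.+1 j k) / eps) *
         (expR ((dlt i.+1 j0 t N.+1 j + dlt i.+1 j0 t N.+2 k) / eps) - 1) = 0.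
  apply: big1 => j _; apply: big1 => k _.
  by rewrite (dlt0 _ _ _ hN2) (dlt0 _ _ _ hN1) addr0 mul0r expR0 subrr mulr0.
rewrite s1 s2 s3 (mid_pert eps C fhat j0 t hi1) ltnS hi -!mulr_suml -/S1 -/S2.
lra.
Qed.

Lemma statC2 (R : realType) (N : nat) (m : nat -> nat) (eps : R) (he : 0 < eps)
  (C : forall i : nat, 'M[R]_(m i, m i.+1)) (a : 'cV[R]_(m 0%N)) (b : 'cV[R]_(m N.+2))
  (fhat : forall i : nat, 'cV[R]_(m i))
  (hopt : forall f : forall i : nat, 'cV[R]_(m i), dual_L eps C a b f <= dual_L eps C a b fhat)
  (j0 : 'I_(m N.+1)) :
  \sum_(k < m N.+2) expR ((fhat N.+1 j0 0 + fhat N.+2 k 0 - C N.+1 j0 k) / eps) =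
  \sum_(j < m N) expR ((fhat N j 0 - fhat N.+1 j0 0 - C N j j0) / eps).
Proof.
set S1 := \sum_(k < m N.+2) _.
set S2 := \sum_(j < m N) _.
have S10 : 0 <= S1 by apply: sumr_ge0 => k _; exact: expR_ge0.
have S20 : 0 <= S2 by apply: sumr_ge0 => k _; exact: expR_ge0.
apply/eqP; rewrite -subr_eq0; apply/eqP; apply/esym.
apply: (key_stat he S10 S20) => t.
have := hopt (pert fhat N.+1 j0 t); rewrite dual_pert /=.
have s1 : \sum_(j < m 0%N) dlt N.+1 j0 t 0 j * a j 0 = 0.
  by apply: big1 => k _; rewrite dlt0 // mul0r.
have hN2 : N.+2 != N.+1 by rewrite neq_ltn ltnSn orbT.
have s2 : \sum_(k < m N.+2) dlt N.+1 j0 t N.+2 k * b k 0 = 0.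
  by apply: big1 => k _; rewrite (dlt0 _ _ _ hN2) mul0r.
have s3 : \sum_(j < m N.+1) \sum_(k < m N.+2)
         expR ((fhat N.+1 j 0 + fhat N.+2 k 0 - C N.+1 j k) / eps) *
         (expR ((dlt N.+1 j0 t N.+1 j + dlt N.+1 j0 t N.+2 k) / eps) - 1) = S1 * (expR (t / eps) - 1).
  rewrite /S1 mulr_suml.
  under eq_bigr => j _ do under eq_bigr => k _ do rewrite dlt1 (dlt0 _ _ _ hN2) addr0.
  rewrite (@sum_pick R _ j0 (fun j x => \sum_(k < m N.+2)
         expR ((fhat N.+1 j 0 + fhat N.+2 k 0 - C N.+1 j k) / eps) *
         (expR (x / eps) - 1))) //.
  by move=> j; apply: big1 => k _; rewrite mul0r expR0 subrr mulr0.
rewrite s1 s2 s3 (mid_pert eps C fhat j0 t (ltnSn N)) ltnn -!mulr_suml -/S2.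
lra.
Qed.

Lemma Gf_ne (R : realType) (N : nat) (m : nat -> nat) (f : forall i : nat, 'cV[R]_(m i)) i j k :
  i != N.+1 -> Gf N f i j k = f i j 0 - f i.+1 k 0.
Proof. by move=> /negbTE h; rewrite /Gf h. Qed.

Theorem mainTheorem3 (R : realType) (N : nat) (m : nat -> nat)
  (hm : forall i : nat, (i <= N.+2)%N -> (0 < m i)%N)
  (C : forall i : nat, 'M[R]_(m i, m i.+1))
  (hC : forall i : nat, (i < N.+2)%N -> forall j k, 0 <= C i j k)
  (a : 'cV[R]_(m 0%N)) (b : 'cV[R]_(m N.+2))
  (ha : prob_vec a) (hb : prob_vec b)
  (eps : R) (heps : 0 < eps)
  (fhat : forall i : nat, 'cV[R]_(m i))
  (hopt : forall f : forall i : nat, 'cV[R]_(m i),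
            dual_L eps C a b f <= dual_L eps C a b fhat) :
  primal_optimal eps C a b (plan_of_dual N eps C fhat).
Proof.
have feasP : feasible a b (plan_of_dual N eps C fhat).
  split.
  - by move=> i _ j k; rewrite plan_entry; exact: expR_ge0.
  - apply/matrixP => j z; rewrite (ord1 z) rowsum.
    under eq_bigr => k _ do rewrite plan_entry Gf_ne //.
    by rewrite (statA heps hopt).
  - apply/matrixP => k z; rewrite (ord1 z) colsum.
    under eq_bigr => j _ do rewrite plan_entry GfN.
    by rewrite (statB heps hopt).
  - move=> i hi; apply/matrixP => j z; rewrite (ord1 z) colsum rowsum.
    have hne : i != N.+1 by rewrite neq_ltn hi.
    under eq_bigr => j' _ do rewrite plan_entry (Gf_ne _ _ _ hne).
    case: (ltnP i N) => h.
      have hne1 : i.+1 != N.+1 by rewrite eqSS neq_ltn h.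
      under [RHS]eq_bigr => k _ do rewrite plan_entry (Gf_ne _ _ _ hne1).
      by rewrite (statC1 heps hopt h).
    have eiN : i = N by apply/eqP; rewrite eqn_leq h andbT -ltnS.
    subst i.
    under [RHS]eq_bigr => k _ do rewrite plan_entry GfN.
    by rewrite (statC2 heps hopt).
split=> // Q hQ.
rewrite -(plan_value heps feasP); exact: weak_dual.
Qed.
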